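(* Let $\mu$ be in the relative interior of $\Delta$. Suppose the updating rule respects the Blackwell order for $\mu$ and $\varphi=\varphi^{\mu}$ has a contractive error at some $x_1\in\Delta$ but produces no expansive error. Writing $\hat x_1=\varphi(x_1)\ne x_1$, there exists $x_1^*\in\ell(\mu,\hat x_1)$ such that $\varphi(x')=x_1^*$ for all $x'\in\ell^{\circ}(x_1^*,x_1)$.
   Context: Let $\Theta$ be a finite set of states, $|\Theta|=n\ge2$, and $\Delta=\Delta(\Theta)$ the simplex of beliefs. An experiment $\pi:\Theta\to\Delta(S)$ ($S$ finite) with prior $\mu$ induces the Bayesian distribution over posteriors $\rho_B$, a finitely supported distribution on $\Delta$ with mean $\mu$ (every such distribution arises from some experiment). Blackwell order: $\pi\succeq\pi'$ iff $\rho_B'$ is a mean-preserving contraction of $\rho_B$. An updating rule is given, for each prior $\mu$, by a distortion function $\varphi^{\mu}:\Delta\to\Delta$: when the Bayesian posterior is $x$, the decision maker holds belief $\varphi^{\mu}(x)$. For a compact action set $A$, continuous $u:A\times\Theta\to\mathbb{R}$, and consistent choice $a^*:\Delta\to A$ (i.e. $a^*(y)\in\arg\max_{a}\mathbb{E}_y u(a,\theta)$ for all $y$), let $W(x)=\mathbb{E}_x u(a^*(\varphi^{\mu}(x)),\theta)$. The rule respects the Blackwell order for $\mu$ if for all such $A,u,a^*$ and all $\pi\succeq\pi'$, $\mathbb{E}_{\rho_B}W\ge\mathbb{E}_{\rho_B'}W$. For $x,y\in\Delta$, $\ell(x,y)$ is the closed segment between them and $\ell^{\circ}(x,y)=\ell(x,y)\setminus\{x,y\}$.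 $\varphi$ has an expansive error at $x$ if $\varphi(x)\notin\ell(x,\mu)$, and a contractive error at $x$ if $\varphi(x)\in\ell(x,\mu)$ and $\varphi(x)\ne x$. *)

(* Defs.v *)
From HB Require Import structures.
From mathcomp Require Import all_boot all_order all_algebra.
From mathcomp Require Import all_classical all_reals topology normedtype.
Import numFieldNormedType.Exports.
Set Implicit Arguments. Unset Strict Implicit. Unset Printing Implicit Defensive.
Import Order.TTheory GRing.Theory Num.Theory.
Local Open Scope ring_scope.
Local Open Scope classical_set_scope.

Section BlackwellDefs.
Variables (R : realType) (n : nat).

(* States are 'I_n; beliefs are row vectors 'rV[R]_n, x ord0 th = prob of th. *)

Definition in_simplex (x : 'rV[R]_n) : Prop :=
  (forall th, 0 <= x ord0 th) /\ \sum_th x ord0 th = 1.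

Definition in_relint_simplex (x : 'rV[R]_n) : Prop :=
  (forall th, 0 < x ord0 th) /\ \sum_th x ord0 th = 1.

Definition segment (x y : 'rV[R]_n) : set 'rV[R]_n :=
  [set z | exists t : R, 0 <= t <= 1 /\ z = (1 - t) *: x + t *: y].

Definition open_segment (x y : 'rV[R]_n) : set 'rV[R]_n :=
  [set z | segment x y z /\ z <> x /\ z <> y].

Definition expansive_error (mu : 'rV[R]_n) (phi : 'rV[R]_n -> 'rV[R]_n)
  (x : 'rV[R]_n) : Prop := ~ segment x mu (phi x).

Definition contractive_error (mu : 'rV[R]_n) (phi : 'rV[R]_n -> 'rV[R]_n)
  (x : 'rV[R]_n) : Prop := segment x mu (phi x) /\ phi x <> x.

(* An experiment with finite signal set 'I_m: pi th s = Prob(s | th). *)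
Definition experiment (m : nat) (pi : 'I_n -> 'I_m -> R) : Prop :=
  forall th, (forall s, 0 <= pi th s) /\ \sum_s pi th s = 1.

Definition sigprob (mu : 'rV[R]_n) (m : nat) (pi : 'I_n -> 'I_m -> R)
  (s : 'I_m) : R := \sum_th mu ord0 th * pi th s.

(* Bayesian posterior after signal s (irrelevant when sigprob = 0) *)
Definition posterior (mu : 'rV[R]_n) (m : nat) (pi : 'I_n -> 'I_m -> R)
  (s : 'I_m) : 'rV[R]_n :=
  \row_th (mu ord0 th * pi th s / sigprob mu pi s).

Definition expect_post (mu : 'rV[R]_n) (m : nat) (pi : 'I_n -> 'I_m -> R)
  (W : 'rV[R]_n -> R) : R :=
  \sum_s sigprob mu pi s * W (posterior mu pi s).

(* rho_B' (from pi') is a mean-preserving contraction of rho_B (from pi):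
   there is a coupling gamma of the two distributions of posteriors such that
   the conditional mean of the pi-posterior given the pi'-posterior is the
   pi'-posterior. *)
Definition mean_preserving_contraction (mu : 'rV[R]_n) (m m' : nat)
  (pi : 'I_n -> 'I_m -> R) (pi' : 'I_n -> 'I_m' -> R) : Prop :=
  exists gamma : 'I_m -> 'I_m' -> R,
    [/\ forall s s', 0 <= gamma s s',
        forall s, \sum_s' gamma s s' = sigprob mu pi s,
        forall s', \sum_s gamma s s' = sigprob mu pi' s' &
        forall s', \sum_s gamma s s' *: posterior mu pi s
                   = sigprob mu pi' s' *: posterior mu pi' s'].

Definition blackwell_geq (mu : 'rV[R]_n) (m m' : nat)
  (pi : 'I_n -> 'I_m -> R) (pi' : 'I_n -> 'I_m' -> R) : Prop :=
  [/\ experiment pi, experiment pi' & mean_preserving_contraction mu pi pi'].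

Definition exp_util (A : Type) (u : A -> 'I_n -> R) (y : 'rV[R]_n) (a : A) : R :=
  \sum_th y ord0 th * u a th.

Definition consistent_choice (A : Type) (u : A -> 'I_n -> R)
  (astar : 'rV[R]_n -> A) : Prop :=
  forall y, in_simplex y -> forall a, exp_util u y a <= exp_util u y (astar y).

(* The updating rule (distortion phi = phi^mu) respects the Blackwell order
   for mu. Theta = 'I_n is finite (discrete), so continuity of
   u : A x Theta -> R is continuity of u(., th) for each th. *)
Definition respects_blackwell (mu : 'rV[R]_n) (phi : 'rV[R]_n -> 'rV[R]_n) : Prop :=
  forall (A : topologicalType) (u : A -> 'I_n -> R) (astar : 'rV[R]_n -> A),
    compact [set: A] ->
    (forall th, continuous (fun a => u a th)) ->
    consistent_choice u astar ->
    forall (m m' : nat) (pi : 'I_n -> 'I_m -> R) (pi' : 'I_n -> 'I_m' -> R),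
      blackwell_geq mu pi pi' ->
      expect_post mu pi' (fun x => exp_util u x (astar (phi x)))
      <= expect_post mu pi (fun x => exp_util u x (astar (phi x))).

End BlackwellDefs.

(* Main.v *)
Require Import Defs.
From HB Require Import structures.
From mathcomp Require Import all_boot all_order all_algebra.
From mathcomp Require Import all_classical all_reals topology normedtype.
From mathcomp Require Import ring lra.
Import numFieldNormedType.Exports.
Import Order.TTheory GRing.Theory Num.Theory.
Set Implicit Arguments. Unset Strict Implicit. Unset Printing Implicit Defensive.
Local Open Scope ring_scope.

Section Aux.
Variables (R : realType) (n : nat).

Definition mkexp (mu : 'rV[R]_n) m (w : 'I_m -> R) (P : 'I_m -> 'rV[R]_n)
  : 'I_n -> 'I_m -> R := fun th s => w s * P s ord0 th / mu ord0 th.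

Lemma mkexp_props mu m (w : 'I_m -> R) (P : 'I_m -> 'rV[R]_n) :
  in_relint_simplex mu -> (forall s, 0 < w s) -> (forall s, in_simplex (P s)) ->
  (forall j, \sum_s w s * P s ord0 j = mu ord0 j) ->
  [/\ experiment (mkexp mu w P), forall s, sigprob mu (mkexp mu w P) s = w s &
      forall s, posterior mu (mkexp mu w P) s = P s].
Proof.
move=> [mupos _] wpos Ps Hmean.
have sg : forall s, sigprob mu (mkexp mu w P) s = w s.
  move=> s; rewrite /sigprob /mkexp.
  rewrite (eq_bigr (fun th => w s * P s ord0 th)) => [|th _]; last first.
    by field; exact: lt0r_neq0 (mupos _).
  by rewrite -mulr_sumr; case: (Ps s) => _ ->; rewrite mulr1.
split=> //.
- move=> th; split.
    move=> s; rewrite /mkexp; apply: divr_ge0; last exact: ltW (mupos _).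
    by apply: mulr_ge0; [exact: ltW (wpos _) | case: (Ps s)].
  by rewrite /mkexp -mulr_suml Hmean divff //; exact: lt0r_neq0 (mupos _).
- move=> s; apply/rowP => th; rewrite /posterior mxE sg /mkexp.
  field; apply/andP; split; [exact: lt0r_neq0 (wpos _) | exact: lt0r_neq0 (mupos _)].
Qed.

Definition xt (mu x1 : 'rV[R]_n) (t : R) : 'rV[R]_n := (1 - t) *: mu + t *: x1.

Lemma xt_sum (mu x1 : 'rV[R]_n) t : \sum_th mu ord0 th = 1 -> \sum_th x1 ord0 th = 1 ->
  \sum_th xt mu x1 t ord0 th = 1.
Proof.
move=> m1 x1s.
under eq_bigr => th _ do rewrite !mxE.
by rewrite big_split /= -!mulr_sumr m1 x1s; ring.
Qed.

Lemma xt_simplex (mu x1 : 'rV[R]_n) t : in_simplex mu -> in_simplex x1 -> 0 <= t <= 1 ->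
  in_simplex (xt mu x1 t).
Proof.
move=> [m0 m1] [x0 x1s] /andP[t0 t1]; split; last exact: xt_sum.
move=> th; rewrite !mxE; apply: addr_ge0; apply: mulr_ge0 => //; lra.
Qed.

Lemma relint_simplex (mu : 'rV[R]_n) : in_relint_simplex mu -> in_simplex mu.
Proof. by case=> h1 h2; split => // th; exact/ltW. Qed.

Lemma simplex_le1 (x : 'rV[R]_n) : in_simplex x -> forall j, x ord0 j <= 1.
Proof.
case=> x0 xs j; rewrite -xs (bigD1 j) //= lerDl; exact: sumr_ge0.
Qed.

Lemma mean_id (wq wa wb tq ta tb m y : R) :
  wq + wa + wb = 1 -> wq * tq + wa * ta + wb * tb = 0 ->
  wq * ((1 - tq) * m + tq * y) + wa * ((1 - ta) * m + ta * y)
   + wb * ((1 - tb) * m + tb * y) = m.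
Proof.
move=> h1 h2.
transitivity ((wq + wa + wb) * m + (wq * tq + wa * ta + wb * tb) * (y - m)).
  by ring.
by rewrite h1 h2; ring.
Qed.

Lemma mean_id2 (wq wp tq tp m y : R) :
  wq + wp = 1 -> wq * tq + wp * tp = 0 ->
  wq * ((1 - tq) * m + tq * y) + wp * ((1 - tp) * m + tp * y) = m.
Proof.
move=> h1 h2.
transitivity ((wq + wp) * m + (wq * tq + wp * tp) * (y - m)); first by ring.
by rewrite h1 h2; ring.
Qed.

Definition f3 (T : Type) (a b c : T) (s : 'I_3) : T :=
  match val s with 0 => a | 1 => b | _ => c end.
Definition f2 (T : Type) (a b : T) (s : 'I_2) : T :=
  match val s with 0 => a | _ => b end.

Lemma conv3 (mu x1 : 'rV[R]_n) (phi : 'rV[R]_n -> 'rV[R]_n) (A : topologicalType) (u : A -> 'I_n -> R) astar :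
  in_relint_simplex mu -> in_simplex x1 -> respects_blackwell mu phi ->
  compact [set: A] -> (forall th, continuous (fun a => u a th)) ->
  consistent_choice u astar ->
  forall ta tp tb, 0 <= ta -> ta < tp -> tp < tb -> tb <= 1 ->
  (tb - ta) * exp_util u (xt mu x1 tp) (astar (phi (xt mu x1 tp)))
  <= (tb - tp) * exp_util u (xt mu x1 ta) (astar (phi (xt mu x1 ta)))
   + (tp - ta) * exp_util u (xt mu x1 tb) (astar (phi (xt mu x1 tb))).
Proof.
move=> hmu hx1 hB hA hu hc ta tp tb ta0 tap tpb tb1.
set W := fun x => exp_util u x (astar (phi x)).
pose e := \big[Order.min/1]_th mu ord0 th.
have e0 : 0 < e.
  apply/bigmin_gtP; split => // th _; by case: hmu.
have emu : forall th, e <= mu ord0 th by move=> th; exact: bigmin_le.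
have hmuS := relint_simplex hmu.
have hq : in_simplex (xt mu x1 (- e)).
  split; last by apply: xt_sum; [case: hmu | case: hx1].
  move=> th; rewrite !mxE.
  have := emu th; have := simplex_le1 hx1 th; case: hx1 => hx0 _.
  have := hx0 th; move=> h1 h2 h3; nra.
have hsa : in_simplex (xt mu x1 ta) by apply: xt_simplex => //; apply/andP; split; lra.
have hsb : in_simplex (xt mu x1 tb) by apply: xt_simplex => //; apply/andP; split; lra.
have hsp : in_simplex (xt mu x1 tp) by apply: xt_simplex => //; apply/andP; split; lra.
pose k := e / ((e + tp) * (tb - ta)).
have k0 : 0 < k by apply: divr_gt0 => //; apply: mulr_gt0; lra.
pose wa := k * (tb - tp). pose wb := k * (tp - ta). pose wp := k * (tb - ta).
pose wq := 1 - wp.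
have wpE : wp = e / (e + tp).
  rewrite /wp /k; field; apply/andP; split; apply/lt0r_neq0; lra.
have wa0 : 0 < wa by apply: mulr_gt0 => //; lra.
have wb0 : 0 < wb by apply: mulr_gt0 => //; lra.
have wp0 : 0 < wp by apply: mulr_gt0 => //; lra.
have wq0 : 0 < wq.
  rewrite /wq wpE subr_gt0 ltr_pdivrMr; lra.
pose P3 := f3 (xt mu x1 (- e)) (xt mu x1 ta) (xt mu x1 tb).
pose w3 := f3 wq wa wb.
pose P2 := f2 (xt mu x1 (- e)) (xt mu x1 tp).
pose w2 := f2 wq wp.
have [ex3 sg3 po3] : [/\ experiment (mkexp mu w3 P3),
   forall s, sigprob mu (mkexp mu w3 P3) s = w3 s &
   forall s, posterior mu (mkexp mu w3 P3) s = P3 s].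
  apply: mkexp_props => //.
  - by move=> [[|[|[|?]]] ?].
  - by move=> [[|[|[|?]]] ?].
  - move=> j; rewrite !big_ord_recr big_ord0 /= add0r /w3 /P3 /f3 /= !mxE.
    apply: mean_id.
      by rewrite /wq /wa /wb /wp; ring.
    rewrite /wq /wa /wb wpE /k; field; apply/andP; split; apply/lt0r_neq0; lra.
have [ex2 sg2 po2] : [/\ experiment (mkexp mu w2 P2),
   forall s, sigprob mu (mkexp mu w2 P2) s = w2 s &
   forall s, posterior mu (mkexp mu w2 P2) s = P2 s].
  apply: mkexp_props => //.
  - by move=> [[|[|?]] ?].
  - by move=> [[|[|?]] ?].
  - move=> j; rewrite !big_ord_recr big_ord0 /= add0r /w2 /P2 /f2 /= !mxE.
    apply: mean_id2; first by rewrite /wq; ring.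
    rewrite /wq wpE; field; apply/lt0r_neq0; lra.
pose gamma := fun (s : 'I_3) (s' : 'I_2) =>
  match val s, val s' with 0, 0 => wq | 1, 1 => wa | 2, 1 => wb | _, _ => 0 end.
have hmpc : mean_preserving_contraction mu (mkexp mu w3 P3) (mkexp mu w2 P2).
  exists gamma; rewrite /gamma; split.
  - move=> [[|[|[|?]]] ?] [[|[|?]] ?] //=; lra.
  - move=> s; rewrite sg3 !big_ord_recr big_ord0 /=.
    by case: s => [[|[|[|?]]] ?] //=; rewrite /w3 /f3 /=; lra.
  - move=> s; rewrite sg2 !big_ord_recr big_ord0 /=.
    case: s => [[|[|?]] ?] //=; rewrite /w2 /f2 /=; rewrite /wq /wa /wb /wp; ring.
  - move=> s; rewrite sg2 po2.
    under eq_bigr => i _ do rewrite po3.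
    rewrite !big_ord_recr big_ord0 /=.
    case: s => [[|[|?]] ?] //=; apply/rowP => j; rewrite /w2 /P2 /P3 /f2 /f3 /= !mxE;
      rewrite ?mul0r ?add0r ?addr0 // /wa /wb /wp; ring.
have := hB A u astar hA hu hc 3%N 2%N _ _ (And3 ex3 ex2 hmpc).
rewrite /expect_post.
rewrite (eq_bigr (fun s => w2 s * W (P2 s))); last by move=> i _; rewrite sg2 po2.
rewrite [X in _ <= X -> _](eq_bigr (fun s => w3 s * W (P3 s))); last by move=> i _; rewrite sg3 po3.
rewrite !big_ord_recr !big_ord0 /= /w2 /w3 /P2 /P3 /f2 /f3 /= -/W => H.
rewrite -(ler_pM2l k0).
have : wp * W (xt mu x1 tp) <= wa * W (xt mu x1 ta) + wb * W (xt mu x1 tb) by lra.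
rewrite /wp /wa /wb /W => h; rewrite [X in _ <= X]mulrDr !mulrA; exact: h.
Qed.

End Aux.

Lemma bcont (R : realType) (f : bool -> R) : continuous f.
Proof.
move=> x A HA. rewrite /= nbhs_simpl.
move: (discrete_set1 x) => H1.
apply: (filterS _ H1) => y /= ->. exact: nbhs_singleton.
Qed.

Unset Implicit Arguments.

Theorem corollary4 (R : realType) (n : nat) (mu : 'rV[R]_n)
  (phi : 'rV[R]_n -> 'rV[R]_n) (x1 : 'rV[R]_n) :
  (2 <= n)%N ->
  in_relint_simplex mu ->
  (forall x, in_simplex x -> in_simplex (phi x)) ->
  respects_blackwell mu phi ->
  in_simplex x1 ->
  contractive_error mu phi x1 ->
  (forall x, in_simplex x -> ~ expansive_error mu phi x) ->
  exists x1s : 'rV[R]_n,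
    segment mu (phi x1) x1s /\
    (forall x', open_segment x1s x1 x' -> phi x' = x1s).
Proof.
move=> hn hmu hphiS hB hx1 [hseg1 hne1] hnoexp.
have hmuS := relint_simplex hmu.
have x1mu : x1 != mu.
  apply/eqP => E; apply: hne1; case: hseg1 => t [_ ->]; rewrite E.
  by apply/rowP => j; rewrite !mxE; ring.
have [j0 hj0] : exists j, x1 ord0 j != mu ord0 j.
  apply: contrapT => H; move/eqP: x1mu; apply; apply/rowP => j.
  apply/eqP; apply/negPn; apply/negP => Hj; apply: H; by exists j.
pose d0 := x1 ord0 j0 - mu ord0 j0.
have d0n : d0 != 0 by rewrite /d0 subr_eq0.
pose X := xt mu x1.
have XS : forall t, 0 <= t <= 1 -> in_simplex (X t).
  by move=> t ht; apply: xt_simplex.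
have Xsum : forall t, \sum_th X t ord0 th = 1.
  by move=> t; apply: xt_sum; [case: hmu | case: hx1].
pose g := fun s => ((phi (X s)) ord0 j0 - mu ord0 j0) / d0.
have gline : forall s, 0 <= s <= 1 -> phi (X s) = X (g s) /\ 0 <= g s <= s.
  move=> s hs; have := hnoexp _ (XS s hs); rewrite /expansive_error.
  move/contrapT => [r [/andP[r0 r1] E]].
  have E2 : phi (X s) = X ((1 - r) * s).
    by rewrite E; apply/rowP => j; rewrite !mxE; ring.
  have gE : g s = (1 - r) * s.
    by rewrite /g E2 /X /xt !mxE /d0; field.
  rewrite gE; split => //; case/andP: hs => s0 s1; apply/andP; split; nra.
pose ud := fun (s : R) (a : bool) (th : 'I_n) =>
  if a then (th == j0)%:R / d0 - (mu ord0 j0 / d0 + s) else 0.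
have f0 : forall s y, exp_util (ud s) y false = 0.
  by move=> s y; rewrite /exp_util big1 // => th _; rewrite /ud mulr0.
have Eut : forall s (y : 'rV[R]_n), \sum_th y ord0 th = 1 ->
    exp_util (ud s) y true = (y ord0 j0 - mu ord0 j0) / d0 - s.
  move=> s y ys; rewrite /exp_util /ud.
  under eq_bigr => th _ do rewrite mulrBr.
  rewrite sumrB -mulr_suml ys mul1r.
  rewrite (bigD1 j0) //= eqxx big1 => [|th /negbTE ->]; last by rewrite mul0r mulr0.
  by rewrite addr0 /d0 /= mulr1n; field.
have HX : forall s t, exp_util (ud s) (X t) true = t - s.
  by move=> s t; rewrite Eut // /X /xt !mxE /d0; field.
have Wval : forall s t, 0 <= t <= 1 ->
  exp_util (ud s) (X t) (0 < exp_util (ud s) (phi (X t)) true)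
  = if s < g t then t - s else 0.
  move=> s t ht; rewrite (gline t ht).1 HX subr_gt0.
  by case: ifP => _; rewrite ?HX ?f0.
have H3 : forall s, 0 <= s -> forall ta tp tb, 0 <= ta -> ta < tp -> tp < tb -> tb <= 1 ->
   (tb - ta) * (if s < g tp then tp - s else 0)
   <= (tb - tp) * (if s < g ta then ta - s else 0)
    + (tp - ta) * (if s < g tb then tb - s else 0).
  move=> s s0 ta tp tb ta0 tap tpb tb1.
  have := @conv3 R n mu x1 phi bool (ud s) (fun y => 0 < exp_util (ud s) y true)
    hmu hx1 hB bool_compact (fun th => @bcont R (fun a => ud s a th)) _ ta tp tb ta0 tap tpb tb1.
  rewrite -/X !Wval; first (move=> h; apply: h); try (apply/andP; split; lra).
  move=> y _ a; case h: (0 < exp_util (ud s) y true); case: a; rewrite ?f0 //.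
  - exact: ltW.
  - by rewrite leNgt h.
have F1 : forall s s1 s2, 0 <= s -> s < s1 -> s1 < s2 -> s2 <= 1 ->
    g s2 <= s -> g s1 <= s.
  move=> s s1 s2 s0 ss1 s12 s21 hg2; rewrite leNgt; apply/negP => hs1.
  have := H3 s s0 s s1 s2 s0 ss1 s12 s21.
  rewrite hs1 (ltNge s (g s2)) hg2 /=.
  have -> : (if s < g s then s - s else 0) = 0 by case: ifP => _; rewrite ?subrr.
  nra.
have F3 : forall s s1 s2, 0 <= s -> s < s1 -> s1 < s2 -> s2 < 1 ->
    g s1 <= s -> g s2 <= s.
  move=> s s1 s2 hs0 ss1 s12 s21 hg1; rewrite leNgt; apply/negP => hs2.
  have := H3 s hs0 s1 s2 1 (ltW (le_lt_trans hs0 ss1)) s12 s21 (lexx _).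
  rewrite hs2 (ltNge s (g s1)) hg1 /=.
  have h1le : (if s < g 1 then 1 - s else 0) <= 1 - s by case: ifP => _; lra.
  have s12p : 0 <= s2 - s1 by lra.
  have := ler_wpM2l s12p h1le.
  have : 0 < (s1 - s) * (1 - s2) by apply: mulr_gt0; lra.
  move=> a b; rewrite mulr0 add0r => c; have d := le_trans c b; clear -a d; nra.
have Ftr : forall s s1 s2, 0 <= s -> s < s1 -> s1 < 1 -> s < s2 -> s2 < 1 ->
    g s1 <= s -> g s2 <= s.
  move=> s s1 s2 s0 ss1 s11 ss2 s21 hg.
  case: (ltgtP s1 s2) => [h|h|<-] //.
  - exact: (F3 s s1 s2).
  - by apply: (F1 s s2 s1) => //; apply: ltW.
have X1 : X 1 = x1 by apply/rowP => j; rewrite /X /xt !mxE; ring.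
have h01 : 0 <= (1:R) <= 1 by rewrite ler01 lexx.
have [gl1 /andP[c0 c1]] := gline 1 h01.
set c := g 1 in gl1 c0 c1 *.
rewrite X1 in gl1.
have clt1 : c < 1.
  rewrite lt_neqAle c1 andbT; apply/eqP => E; apply: hne1; by rewrite gl1 E X1.
pose s0 := (c + 1) / 2.
have s0c : c < s0 by rewrite /s0; lra.
have s01 : s0 < 1 by rewrite /s0; lra.
have [_ /andP[cs0 css0]] := gline s0 (introT andP (conj (ltW (le_lt_trans c0 s0c)) (ltW s01))).
set cs := g s0 in cs0 css0 *.
have csc : cs <= c by apply: (F1 c s0 1) => //.
exists (X cs); split.
  rewrite gl1.
  have [c00|cpos] := eqVneq c 0.
    have cs00 : cs = 0 by apply/le_anti; rewrite cs0 -c00 csc.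
    exists 0; split; first by rewrite lexx ler01.
    by rewrite cs00; apply/rowP => j; rewrite /X /xt !mxE; ring.
  have cgt : 0 < c by rewrite lt_neqAle eq_sym cpos c0.
  exists (cs / c); split.
    apply/andP; split; first exact: divr_ge0.
    by rewrite ler_pdivrMr // mul1r.
  apply/rowP => j; rewrite /X /xt !mxE; field.
  exact: cpos.
move=> x' [[t [/andP[t0 t1] Ex']] [ne1 ne2]].
have tn0 : t != 0.
  apply/eqP => E; apply: ne1; rewrite Ex' E; apply/rowP => j; rewrite !mxE; ring.
have tn1 : t != 1.
  apply/eqP => E; apply: ne2; rewrite Ex' E; apply/rowP => j; rewrite !mxE; ring.
pose tau := (1 - t) * cs + t.
have Ex : x' = X tau by rewrite Ex' /tau; apply/rowP => j; rewrite /X /xt !mxE; ring.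
have tpos : 0 < t by rewrite lt_neqAle eq_sym tn0 t0.
have tlt : t < 1 by rewrite lt_neqAle tn1 t1.
have cs1 : cs < 1 by apply: le_lt_trans csc clt1.
have taucs : cs < tau by rewrite /tau; nra.
have tau1 : tau < 1 by rewrite /tau; nra.
have [gl _] := gline tau (introT andP (conj (ltW (le_lt_trans cs0 taucs)) (ltW tau1))).
rewrite Ex gl; congr X.
apply/le_anti/andP; split.
  exact: (Ftr cs s0 tau cs0 (le_lt_trans csc s0c) s01 taucs tau1 (lexx _)).
rewrite leNgt; apply/negP => hlt.
have [_ /andP[gt0 _]] := gline tau (introT andP (conj (ltW (le_lt_trans cs0 taucs)) (ltW tau1))).
have := Ftr (g tau) tau s0 gt0 (lt_trans hlt taucs) tau1
  (lt_le_trans hlt (le_trans csc (ltW s0c))) s01 (lexx _).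
by rewrite -/cs leNgt hlt.
Qed.
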